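(* Let $\eta>0$, $u>0$, and $r_\eta(\theta):=\frac{\eta-\sqrt{\eta^2+4\sin^2\theta}}{2\sin\theta}$ for $\theta\in(-\pi,0)$. Then $(-\pi,0)$ can be partitioned into at most 9 intervals on each of which the function \[ \theta\mapsto\arg\big\{1-u^2r_\eta^2(\theta)e^{2i\theta}\big\} \] is monotonic. Moreover, when $u\le1$ there exists $\tilde\theta_{\eta,u}\in(-\frac{\pi}{2},0)$ such that this function is decreasing on $(-\pi,-\tilde\theta_{\eta,u}-\pi)$, increasing on $(-\tilde\theta_{\eta,u}-\pi,\tilde\theta_{\eta,u})$ and decreasing on $(\tilde\theta_{\eta,u},0)$; here $\tilde\theta_{\eta,u}$ is the unique solution $\theta\in(-\frac{\pi}{2},0)$ of \[ -u^2r_\eta^8(\theta)-(1-u^2)r_\eta^6(\theta)+(5+u^2)r_\eta^4(\theta)-(u^2+4\eta^2+7)r_\eta^2(\theta)+3=0. \]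
   Context: $\arg$ denotes the principal argument with values in $(-\pi,\pi]$. *)

(* Defs.v *)
From Stdlib Require Import Reals Lra.
Open Scope R_scope.

(* Principal argument, with values in (-PI, PI], of the complex number x + i y.
   (Convention arg 0 = 0; irrelevant here since the relevant number never vanishes.) *)
Definition Arg (x y : R) : R :=
  if Rlt_dec 0 x then atan (y / x)
  else if Rlt_dec x 0 then
    (if Rle_dec 0 y then atan (y / x) + PI else atan (y / x) - PI)
  else if Rlt_dec 0 y then PI / 2
  else if Rlt_dec y 0 then - (PI / 2)
  else 0.

Definition r_eta (eta theta : R) : R :=
  (eta - sqrt (eta ^ 2 + 4 * (sin theta) ^ 2)) / (2 * sin theta).

(* theta |-> arg{ 1 - u^2 r_eta(theta)^2 e^{2 i theta} }, where
   1 - u^2 r^2 e^{2 i theta} = (1 - u^2 r^2 cos(2 theta)) + i (- u^2 r^2 sin(2 theta)). *)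
Definition argfun (eta u theta : R) : R :=
  let w := u ^ 2 * (r_eta eta theta) ^ 2 in
  Arg (1 - w * cos (2 * theta)) (- (w * sin (2 * theta))).

Definition Pthe (eta u theta : R) : R :=
  let r := r_eta eta theta in
  - u ^ 2 * r ^ 8 - (1 - u ^ 2) * r ^ 6 + (5 + u ^ 2) * r ^ 4
  - (u ^ 2 + 4 * eta ^ 2 + 7) * r ^ 2 + 3.

Definition nondecr_on (D : R -> Prop) (f : R -> R) : Prop :=
  forall x y, D x -> D y -> x <= y -> f x <= f y.
Definition nonincr_on (D : R -> Prop) (f : R -> R) : Prop :=
  forall x y, D x -> D y -> x <= y -> f y <= f x.
Definition incr_on (D : R -> Prop) (f : R -> R) : Prop :=
  forall x y, D x -> D y -> x < y -> f x < f y.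
Definition decr_on (D : R -> Prop) (f : R -> R) : Prop :=
  forall x y, D x -> D y -> x < y -> f y < f x.

(* Main.v *)
Require Import Defs.
From Stdlib Require Import Reals Lra Psatz Lia.
From Coquelicot Require Import Coquelicot.
Open Scope R_scope.


Definition pp (eta u x : R) : R :=
  - u ^ 2 * x ^ 4 - (1 - u ^ 2) * x ^ 3 + (5 + u ^ 2) * x ^ 2
  - (u ^ 2 + 4 * eta ^ 2 + 7) * x + 3.

Lemma Pthe_pp eta u th : Pthe eta u th = pp eta u (r_eta eta th ^ 2).
Proof. unfold Pthe, pp. cbv zeta. ring. Qed.

Lemma r_props eta th : 0 < eta -> sin th < 0 ->
  0 < r_eta eta th /\ r_eta eta th < 1 /\
  sin th * (r_eta eta th ^ 2 - 1) = eta * r_eta eta th.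
Proof.
  intros He Hs. unfold r_eta. set (s := sin th) in *.
  assert (HS0: 0 <= eta^2 + 4*s^2) by nra.
  set (S := sqrt (eta^2 + 4*s^2)).
  assert (HS2: S*S = eta^2+4*s^2) by (apply sqrt_sqrt; lra).
  assert (HSp: 0 <= S) by apply sqrt_pos.
  clearbody S.
  assert (HSe: eta < S) by nra.
  set (r := (eta - S)/(2*s)).
  assert (Hr: r*(2*s) = eta - S) by (unfold r; field; lra).
  clearbody r.
  assert (Hr0: 0 < r) by nra.
  split; [exact Hr0|]. split.
  - destruct (Rlt_or_le r 1) as [h|h]; [exact h|].
    exfalso. assert (eta - 2*s <= S) by nra. nra.
  - assert (HSr: S = eta - 2*r*s) by lra. subst S.
    assert (s*(s*r^2 - s - eta*r) = 0) by nra.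
    apply Rmult_integral in H. destruct H; nra.
Qed.


Lemma r_derive eta th : 0 < eta -> sin th < 0 ->
  is_derive (r_eta eta) th
   (cos th * (1 - r_eta eta th ^ 2) * r_eta eta th / (sin th * (1 + r_eta eta th ^ 2))).
Proof.
  intros He Hs. unfold r_eta. auto_derive.
  { repeat split; nra. }
  set (s := sin th) in *. set (c := cos th).
  assert (E1: eta * (eta * 1) + 4 * (s * (s * 1)) = eta^2 + 4*s^2) by ring.
  rewrite E1. 
  assert (HS0: 0 <= eta^2 + 4*s^2) by nra.
  set (S := sqrt (eta^2 + 4*s^2)).
  assert (HS2: S*S = eta^2+4*s^2) by (apply sqrt_sqrt; lra).
  assert (HSp: 0 <= S) by apply sqrt_pos.
  clearbody S.
  assert (HSe: eta < S) by nra.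
  set (r := (eta - S)/(2*s)).
  assert (Hr: r*(2*s) = eta - S) by (unfold r; field; lra).
  clearbody r.
  assert (Hr0: 0 < r) by nra.
  assert (HSr: S = eta - 2*r*s) by lra.
  assert (Hsr: s*(s*r^2 - s - eta*r) = 0) by (subst S; nra).
  apply Rmult_integral in Hsr. destruct Hsr as [Hsr|Hsr]; [lra|].
  assert (Heta: eta = s*(r^2-1)/r).
  { replace (s*(r^2-1)) with (eta*r) by lra. field; lra. }
  assert (HS': S = - s * (1 + r^2) / r) by (rewrite HSr, Heta; field; lra).
  rewrite HS'. rewrite Heta. field. repeat split; try lra; nra.
Qed.


Definition Gf eta u th :=
  (1 - u^2 * r_eta eta th ^2 * cos (2*th)) / (- (u^2 * r_eta eta th ^2 * sin (2*th))).

Definition Gd eta u th :=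
  let s := sin th in let c := cos th in let r := r_eta eta th in
  let w := u^2 * r^2 in
  (2 * ((1 - r^2)/(1 + r^2)) * c^2 - 4*w*s^2*c^2 + (1 - w + 2*w*s^2)*(1 - 2*s^2))
   / (2 * w * s^2 * c^2).

Lemma G_derive eta u th : 0 < eta -> 0 < u -> - (PI/2) < th < 0 ->
  is_derive (Gf eta u) th (Gd eta u th).
Proof.
  intros He Hu Hth.
  assert (Hs: sin th < 0).
  { rewrite <- (Ropp_involutive th), sin_neg. apply Ropp_lt_gt_0_contravar.
    apply sin_gt_0; lra. }
  assert (Hc: 0 < cos th) by (apply cos_gt_0; lra).
  destruct (r_props eta th He Hs) as [Hr0 [Hr1 Hrel]].
  pose proof (r_derive eta th He Hs) as Hd.
  unfold Gf. auto_derive.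
  { assert (HsinP: sin (2*th) < 0).
    { rewrite sin_2a. nra. }
    split; [exists (cos th * (1 - r_eta eta th ^ 2) * r_eta eta th /
       (sin th * (1 + r_eta eta th ^ 2))); exact Hd|].
    split; [exists (cos th * (1 - r_eta eta th ^ 2) * r_eta eta th /
       (sin th * (1 + r_eta eta th ^ 2))); exact Hd|].
    split; [|exact I].
    assert (0 < u * (u * 1) * (r_eta eta th * (r_eta eta th * 1))) by
     (apply Rmult_lt_0_compat; nra).
    nra. }
  replace (Derive (fun x : R => r_eta eta x) th) with
    (cos th * (1 - r_eta eta th ^ 2) * r_eta eta th / (sin th * (1 + r_eta eta th ^ 2)))
    by (symmetry; apply is_derive_unique; exact Hd).
  rewrite sin_2a, cos_2a_sin. unfold Gd. cbv zeta.
  set (s := sin th) in *. set (c := cos th) in *. set (r := r_eta eta th) in *.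
  field. repeat split; try lra; nra.
Qed.

Lemma Gd_sign eta u th : 0 < eta -> 0 < u -> - (PI/2) < th < 0 ->
  Gd eta u th = pp eta u (r_eta eta th ^ 2) /
    (2 * (u^2 * r_eta eta th ^2) * sin th ^2 * cos th ^ 2 * (1 + r_eta eta th ^2) * (1 - r_eta eta th ^ 2)^2).
Proof.
  intros He Hu Hth.
  assert (Hs: sin th < 0).
  { rewrite <- (Ropp_involutive th), sin_neg. apply Ropp_lt_gt_0_contravar.
    apply sin_gt_0; lra. }
  assert (Hc: 0 < cos th) by (apply cos_gt_0; lra).
  destruct (r_props eta th He Hs) as [Hr0 [Hr1 Hrel]].
  assert (Hc2: cos th ^ 2 = 1 - sin th ^ 2).
  { pose proof (sin2_cos2 th) as H. unfold Rsqr in H. nra. }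
  unfold Gd, pp. cbv zeta. rewrite Hc2.
  set (s := sin th) in *. set (r := r_eta eta th) in *.
  clearbody s r.
  assert (Hs': s = eta * r / (r^2 - 1)) by (rewrite <- Hrel; field; nra).
  assert (Hq: (r^2-1)^2 - (eta*r)^2 = (r^2-1)^2 * cos th ^ 2).
  { rewrite Hc2, <- Hrel. ring. }
  subst s. field. repeat split; try lra; try nra.
  rewrite Hq. apply Rmult_integral_contrapositive. split; nra.
Qed.


Lemma atan_inv_neg z : z < 0 -> atan (/ z) = - (PI/2) - atan z.
Proof.
  intros Hz. replace (/ z) with (- / (- z)) by (field; lra).
  rewrite atan_opp, atan_inv by lra. rewrite atan_opp. lra.
Qed.

Lemma Arg_pos x y : 0 < y -> Arg x y = PI/2 - atan (x/y).
Proof.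
  intros Hy. unfold Arg.
  destruct (Rlt_dec 0 x) as [h1|h1].
  - replace (y/x) with (/ (x/y)) by (field; lra).
    rewrite atan_inv; [lra|]. apply Rdiv_lt_0_compat; lra.
  - destruct (Rlt_dec x 0) as [h2|h2].
    + destruct (Rle_dec 0 y) as [h3|h3]; [|lra].
      replace (y/x) with (/ (x/y)) by (field; lra).
      rewrite atan_inv_neg. lra.
      apply Rdiv_neg_pos; lra. 
    + assert (x = 0) by lra. subst x.
      destruct (Rlt_dec 0 y); [|lra].
      replace (0/y) with 0 by (field; lra). rewrite atan_0. lra.
Qed.

Lemma Arg_sym x y : 0 < x \/ y <> 0 -> Arg x (- y) = - Arg x y.
Proof.
  intros H. unfold Arg.
  assert (E: forall a b, atan (- a / b) = - atan (a / b)).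
  { intros a b. unfold Rdiv. rewrite Ropp_mult_distr_l_reverse. apply atan_opp. }
  destruct (Rlt_dec 0 x) as [h1|h1]; [apply E|].
  destruct (Rlt_dec x 0) as [h2|h2].
  - destruct (Rle_dec 0 (-y)) as [h3|h3]; destruct (Rle_dec 0 y) as [h4|h4];
      rewrite ?E; try lra; destruct H; lra.
  - destruct (Rlt_dec 0 (-y)) as [h3|h3]; destruct (Rlt_dec 0 y) as [h4|h4];
    destruct (Rlt_dec (-y) 0) as [h5|h5]; destruct (Rlt_dec y 0) as [h6|h6]; try lra;
    destruct H; lra.
Qed.

Lemma Arg_zero x : 0 < x -> Arg x 0 = 0.
Proof.
  intros. unfold Arg. destruct (Rlt_dec 0 x); [|lra].
  replace (0/x) with 0 by (field; lra). apply atan_0.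
Qed.

Lemma argfun_G eta u th : 0 < eta -> 0 < u -> - (PI/2) < th < 0 ->
  argfun eta u th = PI/2 - atan (Gf eta u th).
Proof.
  intros He Hu Hth.
  assert (Hs: sin th < 0).
  { rewrite <- (Ropp_involutive th), sin_neg. apply Ropp_lt_gt_0_contravar.
    apply sin_gt_0; lra. }
  assert (Hc: 0 < cos th) by (apply cos_gt_0; lra).
  destruct (r_props eta th He Hs) as [Hr0 [Hr1 Hrel]].
  unfold argfun, Gf. cbv zeta. apply Arg_pos.
  rewrite sin_2a.
  assert (0 < u^2 * r_eta eta th ^2) by (apply Rmult_lt_0_compat; nra).
  assert (0 < - sin th * cos th) by nra.
  replace (- (u ^ 2 * r_eta eta th ^ 2 * (2 * sin th * cos th))) with
    (2 * (u^2 * r_eta eta th ^2) * (- sin th * cos th)) by ring.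
  apply Rmult_lt_0_compat; lra.
Qed.

Lemma sin_mir th : sin (- PI - th) = sin th.
Proof.
  replace (- PI - th) with (- (th + PI)) by ring. rewrite sin_neg, neg_sin. ring.
Qed.
Lemma cos_mir th : cos (- PI - th) = - cos th.
Proof.
  replace (- PI - th) with (- (th + PI)) by ring. rewrite cos_neg, neg_cos. ring.
Qed.

Lemma r_mir eta th : r_eta eta (- PI - th) = r_eta eta th.
Proof. unfold r_eta. rewrite sin_mir. reflexivity. Qed.

Lemma argfun_mir eta u th : 0 < eta -> 0 < u -> - PI < th < 0 ->
  argfun eta u (- PI - th) = - argfun eta u th.
Proof.
  intros He Hu Hth.
  assert (Hs: sin th < 0).
  { rewrite <- (Ropp_involutive th), sin_neg. apply Ropp_lt_gt_0_contravar.
    apply sin_gt_0; lra. }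
  destruct (r_props eta th He Hs) as [Hr0 [Hr1 Hrel]].
  unfold argfun. cbv zeta. rewrite r_mir, !sin_2a, !cos_2a_sin, sin_mir, cos_mir.
  set (w := u ^ 2 * r_eta eta th ^ 2).
  assert (Hw: 0 < w) by (apply Rmult_lt_0_compat; unfold w; nra).
  replace (- (w * (2 * sin th * - cos th))) with (- - (w * (2 * sin th * cos th))) by ring.
  apply Arg_sym.
  destruct (Req_dec (cos th) 0) as [h|h].
  - left. pose proof (sin2_cos2 th) as H. unfold Rsqr in H. rewrite h in H. nra.
  - right. intro H. apply h.
    assert (E: cos th = (w * (2 * sin th * cos th)) / (2*w*sin th)) by (field; lra).
    rewrite E. replace (w * (2 * sin th * cos th)) with 0 by lra. field; lra.
Qed.

Lemma argfun_mid eta u : 0 < eta -> 0 < u -> argfun eta u (- (PI/2)) = 0.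
Proof.
  intros He Hu. unfold argfun. cbv zeta. rewrite !sin_2a, !cos_2a_sin, sin_neg, cos_neg, sin_PI2, cos_PI2.
  replace (- (u ^ 2 * r_eta eta (- (PI / 2)) ^ 2 * (2 * - (1) * 0))) with 0 by ring.
  apply Arg_zero. nra.
Qed.


Lemma mono_le f df a b : a <= b ->
  (forall x, a <= x <= b -> is_derive f x (df x)) ->
  (forall x, a < x < b -> 0 <= df x) -> f a <= f b.
Proof.
  intros Hab Hd Hs. destruct (Req_dec a b) as [e|ne]; [subst; lra|].
  destruct (MVT_cor2 f df a b) as [c [Hc1 Hc2]]; [lra| |].
  - intros c Hc. apply is_derive_Reals. apply Hd. exact Hc.
  - specialize (Hs c Hc2). nra.
Qed.

Lemma mono_lt f df a b : a < b ->
  (forall x, a <= x <= b -> is_derive f x (df x)) ->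
  (forall x, a < x < b -> 0 < df x) -> f a < f b.
Proof.
  intros Hab Hd Hs.
  destruct (MVT_cor2 f df a b) as [c [Hc1 Hc2]]; [lra| |].
  - intros c Hc. apply is_derive_Reals. apply Hd. exact Hc.
  - specialize (Hs c Hc2). nra.
Qed.

Lemma mono_ge f df a b : a <= b ->
  (forall x, a <= x <= b -> is_derive f x (df x)) ->
  (forall x, a < x < b -> df x <= 0) -> f b <= f a.
Proof.
  intros Hab Hd Hs. destruct (Req_dec a b) as [e|ne]; [subst; lra|].
  destruct (MVT_cor2 f df a b) as [c [Hc1 Hc2]]; [lra| |].
  - intros c Hc. apply is_derive_Reals. apply Hd. exact Hc.
  - specialize (Hs c Hc2). nra.
Qed.

Lemma mono_gt f df a b : a < b ->
  (forall x, a <= x <= b -> is_derive f x (df x)) ->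
  (forall x, a < x < b -> df x < 0) -> f b < f a.
Proof.
  intros Hab Hd Hs.
  destruct (MVT_cor2 f df a b) as [c [Hc1 Hc2]]; [lra| |].
  - intros c Hc. apply is_derive_Reals. apply Hd. exact Hc.
  - specialize (Hs c Hc2). nra.
Qed.

Lemma atan_le x y : x <= y -> atan x <= atan y.
Proof.
  intros H. destruct (Req_dec x y); [subst; lra|]. left. apply atan_increasing. lra.
Qed.


Definition tau eta x := eta * sqrt x / (1 - x).
Definition thm eta x := - asin (tau eta x).
Definition Rt eta := (sqrt (eta^2 + 4) - eta) / 2.
Definition Xm eta := Rt eta ^ 2.

Lemma Rt_props eta : 0 < eta -> 0 < Rt eta /\ Rt eta < 1 /\ eta * Rt eta = 1 - Rt eta ^ 2.
Proof.
  intros He. unfold Rt.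
  assert (H0: 0 <= eta^2+4) by nra.
  pose proof (sqrt_sqrt _ H0) as H1. pose proof (sqrt_pos (eta^2+4)) as H2.
  set (S := sqrt (eta^2+4)) in *. clearbody S.
  assert (eta < S) by nra.
  repeat split; nra.
Qed.

Lemma Xm_props eta : 0 < eta -> 0 < Xm eta < 1.
Proof. intros He. destruct (Rt_props eta He) as [a [b c]]. unfold Xm. split; nra. Qed.

Lemma div_lt_cross a b c d : 0 < b -> 0 < d -> a * d < c * b -> a / b < c / d.
Proof.
  intros Hb Hd H. apply (Rmult_lt_reg_r (b*d)); [nra|].
  replace (a / b * (b * d)) with (a*d) by (field; lra).
  replace (c / d * (b * d)) with (c*b) by (field; lra). exact H.
Qed.

Lemma tau_lt eta x y : 0 < eta -> 0 <= x -> x < y -> y < 1 -> tau eta x < tau eta y.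
Proof.
  intros He Hx Hxy Hy. unfold tau. apply div_lt_cross; try lra.
  pose proof (sqrt_lt_1 x y Hx ltac:(lra) Hxy). pose proof (sqrt_pos x).
  assert (0 < (sqrt y - sqrt x) * (1 - x)) by (apply Rmult_lt_0_compat; lra).
  assert (0 <= sqrt x * (y - x)) by (apply Rmult_le_pos; lra).
  assert (0 < eta * ((sqrt y - sqrt x) * (1 - x) + sqrt x * (y - x))) by (apply Rmult_lt_0_compat; lra).
  nra.
Qed.

Lemma tau_le eta x y : 0 < eta -> 0 <= x -> x <= y -> y < 1 -> tau eta x <= tau eta y.
Proof.
  intros. destruct (Req_dec x y); [subst; lra|]. left; apply tau_lt; lra.
Qed.

Lemma tau_nonneg eta x : 0 < eta -> 0 <= x < 1 -> 0 <= tau eta x.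
Proof.
  intros He Hx. unfold tau. apply Rmult_le_pos; [|left; apply Rinv_0_lt_compat; lra].
  pose proof (sqrt_pos x). nra.
Qed.

Lemma tau_Xm eta : 0 < eta -> tau eta (Xm eta) = 1.
Proof.
  intros He. destruct (Rt_props eta He) as [a [b c]]. unfold tau, Xm.
  rewrite sqrt_pow2 by lra. rewrite c. field. nra.
Qed.

Lemma tau_r eta th : 0 < eta -> sin th < 0 -> tau eta (r_eta eta th ^ 2) = - sin th.
Proof.
  intros He Hs. destruct (r_props eta th He Hs) as [a [b c]]. unfold tau.
  rewrite sqrt_pow2 by lra. rewrite <- c. field. nra.
Qed.

Lemma tau_range eta x : 0 < eta -> 0 <= x <= Xm eta -> 0 <= tau eta x <= 1.
Proof.
  intros He Hx. pose proof (Xm_props eta He). split.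
  - apply tau_nonneg; lra.
  - rewrite <- (tau_Xm eta He). apply tau_le; lra.
Qed.

Lemma sin_thm eta x : 0 < eta -> 0 <= x <= Xm eta -> sin (thm eta x) = - tau eta x.
Proof.
  intros He Hx. pose proof (tau_range eta x He Hx). unfold thm.
  rewrite sin_neg, sin_asin; lra.
Qed.

Lemma asin_lt a b : -1 <= a -> a < b -> b <= 1 -> asin a < asin b.
Proof.
  intros Ha Hab Hb. destruct (Rlt_or_le (asin a) (asin b)) as [h|h]; [exact h|].
  exfalso. pose proof (asin_bound a). pose proof (asin_bound b).
  pose proof (sin_incr_1 (asin b) (asin a) ltac:(lra) ltac:(lra) ltac:(lra) ltac:(lra) h).
  rewrite !sin_asin in H1; lra.
Qed.

Lemma thm_range eta x : 0 < eta -> 0 <= x <= Xm eta -> - (PI/2) <= thm eta x <= 0.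
Proof.
  intros He Hx. pose proof (tau_range eta x He Hx). unfold thm.
  pose proof (asin_bound (tau eta x)).
  destruct (Req_dec (tau eta x) 0) as [h|h].
  - rewrite h, asin_0. lra.
  - pose proof (asin_lt 0 (tau eta x) ltac:(lra) ltac:(lra) ltac:(lra)).
    rewrite asin_0 in H1. lra.
Qed.

Lemma thm_0 eta : thm eta 0 = 0.
Proof. unfold thm, tau. rewrite sqrt_0. replace (eta * 0 / (1 - 0)) with 0 by field.
  rewrite asin_0. lra. Qed.

Lemma thm_Xm eta : 0 < eta -> thm eta (Xm eta) = - (PI/2).
Proof. intros He. unfold thm. rewrite tau_Xm, asin_1 by exact He. reflexivity. Qed.

Lemma thm_lt eta a b : 0 < eta -> 0 <= a -> a < b -> b <= Xm eta -> thm eta b < thm eta a.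
Proof.
  intros He Ha Hab Hb. pose proof (Xm_props eta He).
  pose proof (tau_range eta a He ltac:(lra)). pose proof (tau_range eta b He ltac:(lra)).
  pose proof (tau_lt eta a b He Ha Hab ltac:(lra)).
  unfold thm. pose proof (asin_lt (tau eta a) (tau eta b) ltac:(lra) H2 ltac:(lra)). lra.
Qed.

Lemma sin_neg_of th : - PI < th < 0 -> sin th < 0.
Proof.
  intros H. rewrite <- (Ropp_involutive th), sin_neg. apply Ropp_lt_gt_0_contravar.
  apply sin_gt_0; lra.
Qed.

Lemma xs_gt eta a z : 0 < eta -> 0 <= a <= Xm eta -> - (PI/2) <= z -> z < thm eta a ->
  a < r_eta eta z ^ 2.
Proof.
  intros He Ha Hz1 Hz2. pose proof (Xm_props eta He). pose proof (thm_range eta a He Ha).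
  assert (Hs: sin z < 0) by (apply sin_neg_of; lra).
  destruct (r_props eta z He Hs) as [r0 [r1 _]].
  pose proof (sin_increasing_1 z (thm eta a) ltac:(lra) ltac:(lra) ltac:(lra) ltac:(lra) Hz2).
  rewrite sin_thm in H1 by lra.
  destruct (Rlt_or_le a (r_eta eta z ^ 2)) as [h|h]; [exact h|]. exfalso.
  pose proof (tau_le eta (r_eta eta z ^ 2) a He ltac:(nra) h ltac:(lra)).
  rewrite tau_r in H2 by lra. lra.
Qed.

Lemma xs_lt eta b z : 0 < eta -> 0 <= b <= Xm eta -> thm eta b < z -> z < 0 ->
  r_eta eta z ^ 2 < b.
Proof.
  intros He Hb Hz1 Hz2. pose proof (Xm_props eta He). pose proof (thm_range eta b He Hb).
  assert (Hs: sin z < 0) by (apply sin_neg_of; lra).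
  destruct (r_props eta z He Hs) as [r0 [r1 _]].
  pose proof (sin_increasing_1 (thm eta b) z ltac:(lra) ltac:(lra) ltac:(lra) ltac:(lra) Hz1).
  rewrite sin_thm in H1 by lra.
  destruct (Rlt_or_le (r_eta eta z ^ 2) b) as [h|h]; [exact h|]. exfalso.
  pose proof (tau_le eta b (r_eta eta z ^ 2) He ltac:(lra) h ltac:(nra)).
  rewrite tau_r in H2 by lra. lra.
Qed.

Lemma xs_eq eta a : 0 < eta -> 0 < a < Xm eta -> r_eta eta (thm eta a) ^ 2 = a.
Proof.
  intros He Ha. pose proof (Xm_props eta He).
  pose proof (thm_lt eta 0 a He ltac:(lra) ltac:(lra) ltac:(lra)).
  pose proof (thm_lt eta a (Xm eta) He ltac:(lra) ltac:(lra) ltac:(lra)).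
  rewrite thm_0 in H0. rewrite thm_Xm in H1 by lra.
  assert (Hs: sin (thm eta a) < 0) by (apply sin_neg_of; lra).
  destruct (r_props eta _ He Hs) as [r0 [r1 _]].
  pose proof (tau_r eta _ He Hs). rewrite sin_thm in H2 by lra.
  destruct (Rtotal_order (r_eta eta (thm eta a) ^ 2) a) as [h|[h|h]]; [|exact h|].
  - assert (0 <= r_eta eta (thm eta a) ^ 2) by nra.
    pose proof (tau_lt eta (r_eta eta (thm eta a) ^ 2) a He H3 h ltac:(lra)). lra.
  - assert (r_eta eta (thm eta a) ^ 2 < 1) by nra.
    pose proof (tau_lt eta a (r_eta eta (thm eta a) ^ 2) He ltac:(lra) h H3). lra.
Qed.


Definition pd eta u x := - 4 * u^2 * x^3 - 3 * (1 - u^2) * x^2 + 2 * (5 + u^2) * x - (u^2 + 4 * eta^2 + 7).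
Definition pdd u x := - 12 * u^2 * x^2 - 6 * (1 - u^2) * x + 2 * (5 + u^2).

Lemma pp_derive eta u x : is_derive (pp eta u) x (pd eta u x).
Proof. unfold pp. auto_derive; [exact I|]. unfold pd. ring. Qed.

Lemma pd_derive eta u x : is_derive (pd eta u) x (pdd u x).
Proof. unfold pd. auto_derive; [exact I|]. unfold pdd. ring. Qed.

Lemma cont_of_derive f df : (forall x, is_derive f x (df x)) -> continuity f.
Proof.
  intros H x. apply derivable_continuous_pt. exists (df x).
  apply is_derive_Reals. apply H.
Qed.

Lemma pp_cont eta u : continuity (pp eta u).
Proof. apply (cont_of_derive _ _ (pp_derive eta u)). Qed.
Lemma pd_cont eta u : continuity (pd eta u).
Proof. apply (cont_of_derive _ _ (pd_derive eta u)). Qed.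
Lemma pdd_cont u : continuity (pdd u).
Proof. apply (cont_of_derive _ (fun x => - 24 * u^2 * x - 6 * (1 - u^2))).
  intros x. unfold pdd. auto_derive; [exact I|]. ring. Qed.

Lemma pp_Xm eta u : 0 < eta -> 0 < u -> pp eta u (Xm eta) < 0.
Proof.
  intros He Hu. destruct (Rt_props eta He) as [H0 [H1 H2]]. unfold Xm.
  set (R0 := Rt eta) in *. clearbody R0.
  assert (Heta: eta = (1 - R0^2)/R0) by (rewrite <- H2; field; lra).
  assert (E: pp eta u (R0^2) = - (1 - R0^2)^2 * (u^2 * R0^2 * (R0^2 + 1) + R0^2 + 1)).
  { unfold pp. rewrite Heta. field. lra. }
  rewrite E.
  assert (0 < (1 - R0^2)^2) by (apply pow_lt; nra).
  assert (0 < u^2 * R0^2 * (R0^2 + 1) + R0^2 + 1).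
  { assert (0 <= u^2 * R0^2 * (R0^2+1)) by (apply Rmult_le_pos; nra). nra. }
  nra.
Qed.

Lemma pd_neg eta u x : 0 < eta -> 0 < u -> u <= 1 -> 0 <= x <= 1 -> pd eta u x < 0.
Proof.
  intros He Hu Hu1 Hx.
  assert (E: pd eta u x = (x - 1) * (7 + u^2 - (3 + u^2) * x - 4 * u^2 * x^2) - 4 * eta^2)
    by (unfold pd; ring).
  rewrite E.
  assert (h: 0 <= 7 + u^2 - (3 + u^2) * x - 4 * u^2 * x^2).
  { assert (x^2 <= 1) by nra. assert (u^2 <= 1) by nra.
    assert (u^2 * x^2 <= u^2) by nra. assert (u^2 * x <= u^2) by nra. nra. }
  assert ((x - 1) * (7 + u^2 - (3 + u^2) * x - 4 * u^2 * x^2) <= 0).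
  { apply Rmult_le_0_r; lra. }
  nra.
Qed.

Lemma pp_strict_decr eta u x y : 0 < eta -> 0 < u -> u <= 1 -> 0 <= x -> x < y -> y <= 1 ->
  pp eta u y < pp eta u x.
Proof.
  intros. apply (mono_gt (pp eta u) (pd eta u) x y); auto.
  - intros. apply pp_derive.
  - intros. apply pd_neg; lra.
Qed.


Lemma mono_piece_inc g a b : a <= b -> continuity g ->
  (forall x y, a <= x -> x <= y -> y <= b -> g x <= g y) ->
  exists c, a <= c <= b /\ (forall x, a < x < c -> g x <= 0) /\ (forall x, c < x < b -> 0 <= g x).
Proof.
  intros Hab Hc Hm.
  destruct (Rle_or_lt 0 (g a)) as [h1|h1].
  { exists a. split; [lra|]. split; [intros; lra|]. intros x Hx.
    specialize (Hm a x ltac:(lra) ltac:(lra) ltac:(lra)). lra. }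
  destruct (Rle_or_lt (g b) 0) as [h2|h2].
  { exists b. split; [lra|]. split; [|intros; lra]. intros x Hx.
    specialize (Hm x b ltac:(lra) ltac:(lra) ltac:(lra)). lra. }
  assert (a < b).
  { destruct (Req_dec a b); [subst; lra|lra]. }
  destruct (IVT g a b Hc H h1 h2) as [c [Hc1 Hc2]].
  exists c. split; [lra|]. split.
  - intros x Hx. specialize (Hm x c ltac:(lra) ltac:(lra) ltac:(lra)). lra.
  - intros x Hx. specialize (Hm c x ltac:(lra) ltac:(lra) ltac:(lra)). lra.
Qed.

Lemma mono_piece_dec g a b : a <= b -> continuity g ->
  (forall x y, a <= x -> x <= y -> y <= b -> g y <= g x) ->
  exists c, a <= c <= b /\ (forall x, a < x < c -> 0 <= g x) /\ (forall x, c < x < b -> g x <= 0).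
Proof.
  intros Hab Hc Hm.
  destruct (mono_piece_inc (fun x => - g x) a b Hab) as [c [H1 [H2 H3]]].
  - apply continuity_opp. exact Hc.
  - intros x y Hx Hxy Hy. specialize (Hm x y Hx Hxy Hy). lra.
  - exists c. split; [exact H1|]. split.
    + intros x Hx. specialize (H2 x Hx). simpl in H2. lra.
    + intros x Hx. specialize (H3 x Hx). simpl in H3. lra.
Qed.

Lemma prod5 a b c d e : 0 <= a -> 0 <= b -> 0 <= c -> 0 <= d -> 0 <= e -> 0 <= a*b*c*d*e.
Proof. intros. repeat apply Rmult_le_pos; assumption. Qed.

Lemma pdd_conc u x y : 0 < u -> 0 <= x <= y -> 0 < y ->
  y * pdd u x = (y - x) * pdd u 0 + x * pdd u y + 12 * u^2 * x * y * (y - x).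
Proof. intros. unfold pdd. ring. Qed.

Lemma pdd_split eta u : 0 < eta -> 0 < u ->
  exists a, 0 <= a <= Xm eta /\ (forall x, 0 < x < a -> 0 <= pdd u x) /\
     (forall x, a < x < Xm eta -> pdd u x <= 0).
Proof.
  intros He Hu. pose proof (Xm_props eta He) as HX.
  assert (H0: 0 < pdd u 0) by (unfold pdd; nra).
  destruct (Rle_or_lt 0 (pdd u (Xm eta))) as [h|h].
  - exists (Xm eta). split; [lra|]. split; [|intros; lra].
    intros x Hx. pose proof (pdd_conc u x (Xm eta) Hu ltac:(lra) ltac:(lra)).
    assert (0 <= (Xm eta - x) * pdd u 0) by (apply Rmult_le_pos; lra).
    assert (0 <= x * pdd u (Xm eta)) by (apply Rmult_le_pos; lra).
    assert (0 <= 12 * u^2 * x * Xm eta * (Xm eta - x)).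
    { apply prod5; nra. }
    assert (0 <= Xm eta * pdd u x) by lra. nra.
  - destruct (IVT (fun x => - pdd u x) 0 (Xm eta)) as [a [Ha1 Ha2]].
    + apply continuity_opp. apply pdd_cont.
    + lra.
    + lra.
    + lra.
    + assert (Ha0: pdd u a = 0) by lra.
      exists a. split; [lra|]. split.
      * intros x Hx. pose proof (pdd_conc u x a Hu ltac:(lra) ltac:(lra)).
        assert (0 <= (a - x) * pdd u 0) by (apply Rmult_le_pos; lra).
        assert (0 <= 12 * u^2 * x * a * (a - x)).
        { apply prod5; nra. }
        rewrite Ha0 in H. assert (0 <= a * pdd u x) by lra. nra.
      * intros x Hx. destruct (Rle_or_lt (pdd u x) 0) as [h'|h']; [exact h'|]. exfalso.
        pose proof (pdd_conc u a x Hu ltac:(lra) ltac:(lra)).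
        assert (0 < (x - a) * pdd u 0) by (apply Rmult_lt_0_compat; lra).
        assert (0 <= a * pdd u x) by (apply Rmult_le_pos; lra).
        assert (0 <= 12 * u^2 * a * x * (x - a)).
        { apply prod5; nra. }
        rewrite Ha0 in H. lra.
Qed.

Definition SgP eta u a b := forall x, a < x < b -> 0 <= pp eta u x.
Definition SgN eta u a b := forall x, a < x < b -> pp eta u x <= 0.

Lemma xpieces eta u : 0 < eta -> 0 < u ->
  exists y1 y2 y3, 0 <= y1 <= y2 /\ y2 <= y3 <= Xm eta /\
    SgP eta u 0 y1 /\ SgN eta u y1 y2 /\ SgP eta u y2 y3 /\ SgN eta u y3 (Xm eta).
Proof.
  intros He Hu. pose proof (Xm_props eta He) as HX.
  destruct (pdd_split eta u He Hu) as [a [Ha [Ha1 Ha2]]].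
  assert (Pd1: forall x y, 0 <= x -> x <= y -> y <= a -> pd eta u x <= pd eta u y).
  { intros x y H1 H2 H3. apply (mono_le (pd eta u) (pdd u)); auto.
    intros; apply pd_derive. intros; apply Ha1; lra. }
  assert (Pd2: forall x y, a <= x -> x <= y -> y <= Xm eta -> pd eta u y <= pd eta u x).
  { intros x y H1 H2 H3. apply (mono_ge (pd eta u) (pdd u)); auto.
    intros; apply pd_derive. intros; apply Ha2; lra. }
  destruct (mono_piece_inc (pd eta u) 0 a ltac:(lra) (pd_cont eta u) Pd1) as [c [Hc [Hc1 Hc2]]].
  destruct (mono_piece_dec (pd eta u) a (Xm eta) ltac:(lra) (pd_cont eta u) Pd2) as [d [Hd [Hd1 Hd2]]].
  assert (P1: forall x y, 0 <= x -> x <= y -> y <= c -> pp eta u y <= pp eta u x).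
  { intros x y H1 H2 H3. apply (mono_ge (pp eta u) (pd eta u)); auto.
    intros; apply pp_derive. intros; apply Hc1; lra. }
  assert (Pda: c < a -> 0 <= pd eta u a).
  { intros h. specialize (Hc2 ((c+a)/2) ltac:(lra)).
    specialize (Pd1 ((c+a)/2) a ltac:(lra) ltac:(lra) ltac:(lra)). lra. }
  assert (P2: forall x y, c <= x -> x <= y -> y <= d -> pp eta u x <= pp eta u y).
  { intros x y H1 H2 H3. apply (mono_le (pp eta u) (pd eta u)); auto.
    intros; apply pp_derive. intros z Hz.
    destruct (Rtotal_order z a) as [h|[h|h]].
    - apply Hc2; lra.
    - subst z. apply Pda. lra.
    - apply Hd1; lra. }
  assert (P3: forall x y, d <= x -> x <= y -> y <= Xm eta -> pp eta u y <= pp eta u x).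
  { intros x y H1 H2 H3. apply (mono_ge (pp eta u) (pd eta u)); auto.
    intros; apply pp_derive. intros; apply Hd2; lra. }
  destruct (mono_piece_dec (pp eta u) 0 c ltac:(lra) (pp_cont eta u) P1) as [y1 [Hy1 [Hy11 Hy12]]].
  destruct (mono_piece_inc (pp eta u) c d ltac:(lra) (pp_cont eta u) P2) as [y2 [Hy2 [Hy21 Hy22]]].
  destruct (mono_piece_dec (pp eta u) d (Xm eta) ltac:(lra) (pp_cont eta u) P3) as [y3 [Hy3 [Hy31 Hy32]]].
  exists y1, y2, y3. split; [lra|]. split; [lra|]. split; [|split; [|split]].
  - exact Hy11.
  - intros z Hz. destruct (Rtotal_order z c) as [h|[h|h]].
    + apply Hy12; lra.
    + subst z. specialize (Hy12 ((y1+c)/2) ltac:(lra)).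
      specialize (P1 ((y1+c)/2) c ltac:(lra) ltac:(lra) ltac:(lra)). lra.
    + apply Hy21; lra.
  - intros z Hz. destruct (Rtotal_order z d) as [h|[h|h]].
    + apply Hy22; lra.
    + subst z. specialize (Hy22 ((y2+d)/2) ltac:(lra)).
      specialize (P2 ((y2+d)/2) d ltac:(lra) ltac:(lra) ltac:(lra)). lra.
    + apply Hy31; lra.
  - exact Hy32.
Qed.


Lemma chain_le (pts : nat -> R) n : (forall i, (i < n)%nat -> pts i <= pts (S i)) ->
  forall i j, (i <= j)%nat -> (j <= n)%nat -> pts i <= pts j.
Proof.
  intros H i j Hij. induction Hij as [|j Hij IH]; intros Hj; [lra|].
  specialize (IH ltac:(lia)). specialize (H j ltac:(lia)). lra.
Qed.

Lemma compact_pts (P : R -> R -> Prop) n : forall (pts : nat -> R),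
  pts 0%nat < pts n ->
  (forall i, (i < n)%nat -> pts i <= pts (S i)) ->
  (forall i, (i < n)%nat -> P (pts i) (pts (S i))) ->
  exists m (q : nat -> R), (1 <= m)%nat /\ (m <= n)%nat /\ q 0%nat = pts 0%nat /\ q m = pts n /\
    (forall i, (i < m)%nat -> q i < q (S i)) /\ (forall i, (i < m)%nat -> P (q i) (q (S i))).
Proof.
  induction n as [|n IH]; intros pts Hlt Hle HP; [lra|].
  pose (pts' := fun i => pts (S i)).
  assert (Hle' : forall i, (i < n)%nat -> pts' i <= pts' (S i)) by (intros; apply Hle; lia).
  assert (HP' : forall i, (i < n)%nat -> P (pts' i) (pts' (S i))) by (intros; apply HP; lia).
  assert (H01 := Hle 0%nat ltac:(lia)).
  destruct (Req_dec (pts 0%nat) (pts 1%nat)) as [e|ne].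
  - destruct (IH pts' ltac:(unfold pts'; rewrite <- e; exact Hlt) Hle' HP') as
      [m [q [h1 [h2 [h3 [h4 [h5 h6]]]]]]].
    exists m, q. repeat split; try lia; auto.
    rewrite h3. unfold pts'. auto.
  - assert (H1n: pts 1%nat <= pts (S n)) by (apply (chain_le pts (S n)); auto; lia).
    destruct (Req_dec (pts 1%nat) (pts (S n))) as [e'|ne'].
    + exists 1%nat, (fun i => match i with O => pts 0%nat | _ => pts (S n) end).
      repeat split; try lia; auto.
      * intros i Hi. assert (i = 0%nat) by lia. subst. lra.
      * intros i Hi. assert (i = 0%nat) by lia. subst. rewrite <- e'. apply HP. lia.
    + destruct (IH pts' ltac:(unfold pts'; lra) Hle' HP') as
        [m [q [h1 [h2 [h3 [h4 [h5 h6]]]]]]].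
      exists (S m), (fun i => match i with O => pts 0%nat | S j => q j end).
      repeat split; try lia; auto.
      * intros i Hi. destruct i as [|i].
        -- rewrite h3. unfold pts'. lra.
        -- apply h5. lia.
      * intros i Hi. destruct i as [|i].
        -- rewrite h3. unfold pts'. apply HP. lia.
        -- apply h6. lia.
Qed.


Lemma prod6_lt a b c d e g : 0 < a -> 0 < b -> 0 < c -> 0 < d -> 0 < e -> 0 < g -> 0 < a*b*c*d*e*g.
Proof. intros. repeat apply Rmult_lt_0_compat; assumption. Qed.

Section S.
Variables (eta u : R) (He : 0 < eta) (Hu : 0 < u).

Lemma sinc_props th : - (PI/2) < th < 0 -> sin th < 0 /\ 0 < cos th.
Proof.
  intros Hth. split.
  - apply sin_neg_of. lra.
  - apply cos_gt_0; lra.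
Qed.

Lemma Gd_sign_le th : - (PI/2) < th < 0 -> pp eta u (r_eta eta th ^ 2) <= 0 -> Gd eta u th <= 0.
Proof.
  intros Hth Hp. destruct (sinc_props th Hth) as [Hs Hc].
  destruct (r_props eta th He Hs) as [r0 [r1 _]].
  rewrite Gd_sign by auto. unfold Rdiv.
  apply Rmult_le_0_r; [exact Hp|]. left. apply Rinv_0_lt_compat.
  assert (0 < u^2 * r_eta eta th ^2) by (apply Rmult_lt_0_compat; nra).
  assert (0 < sin th ^ 2) by nra. assert (0 < cos th ^ 2) by nra.
  assert (0 < (1 - r_eta eta th ^ 2)^2) by (apply pow_lt; nra).
  apply prod6_lt; nra.
Qed.

Lemma Gd_sign_ge th : - (PI/2) < th < 0 -> 0 <= pp eta u (r_eta eta th ^ 2) -> 0 <= Gd eta u th.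
Proof.
  intros Hth Hp. destruct (sinc_props th Hth) as [Hs Hc].
  destruct (r_props eta th He Hs) as [r0 [r1 _]].
  rewrite Gd_sign by auto. unfold Rdiv.
  apply Rmult_le_pos; [exact Hp|]. left. apply Rinv_0_lt_compat.
  assert (0 < u^2 * r_eta eta th ^2) by (apply Rmult_lt_0_compat; nra).
  assert (0 < sin th ^ 2) by nra. assert (0 < cos th ^ 2) by nra.
  assert (0 < (1 - r_eta eta th ^ 2)^2) by (apply pow_lt; nra).
  apply prod6_lt; nra.
Qed.

Lemma Gd_sign_lt th : - (PI/2) < th < 0 -> pp eta u (r_eta eta th ^ 2) < 0 -> Gd eta u th < 0.
Proof.
  intros Hth Hp. destruct (sinc_props th Hth) as [Hs Hc].
  destruct (r_props eta th He Hs) as [r0 [r1 _]].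
  rewrite Gd_sign by auto. unfold Rdiv.
  apply Rmult_neg_pos; [exact Hp|]. apply Rinv_0_lt_compat.
  assert (0 < u^2 * r_eta eta th ^2) by (apply Rmult_lt_0_compat; nra).
  assert (0 < sin th ^ 2) by nra. assert (0 < cos th ^ 2) by nra.
  assert (0 < (1 - r_eta eta th ^ 2)^2) by (apply pow_lt; nra).
  apply prod6_lt; nra.
Qed.

Lemma Gd_sign_gt th : - (PI/2) < th < 0 -> 0 < pp eta u (r_eta eta th ^ 2) -> 0 < Gd eta u th.
Proof.
  intros Hth Hp. destruct (sinc_props th Hth) as [Hs Hc].
  destruct (r_props eta th He Hs) as [r0 [r1 _]].
  rewrite Gd_sign by auto. unfold Rdiv.
  apply Rmult_lt_0_compat; [exact Hp|]. apply Rinv_0_lt_compat.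
  assert (0 < u^2 * r_eta eta th ^2) by (apply Rmult_lt_0_compat; nra).
  assert (0 < sin th ^ 2) by nra. assert (0 < cos th ^ 2) by nra.
  assert (0 < (1 - r_eta eta th ^ 2)^2) by (apply pow_lt; nra).
  apply prod6_lt; nra.
Qed.

Let f := argfun eta u.

Lemma f_pos th : - (PI/2) < th < 0 -> 0 < f th.
Proof.
  intros Hth. unfold f. rewrite argfun_G by auto.
  pose proof (atan_bound (Gf eta u th)). lra.
Qed.

Lemma f_mir th : - PI < th < 0 -> f (- PI - th) = - f th.
Proof. intros. unfold f. apply argfun_mir; auto. Qed.

Lemma f_neg th : - PI < th < - (PI/2) -> f th < 0.
Proof.
  intros Hth. pose proof (f_mir (- PI - th) ltac:(lra)) as E.
  replace (- PI - (- PI - th)) with th in E by ring.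
  pose proof (f_pos (- PI - th) ltac:(lra)). lra.
Qed.

Lemma f_mid : f (- (PI/2)) = 0.
Proof. unfold f. apply argfun_mid; auto. Qed.

Lemma right_le x y : - (PI/2) < x -> x <= y -> y < 0 ->
  (forall z, x < z < y -> pp eta u (r_eta eta z ^ 2) <= 0) -> f x <= f y.
Proof.
  intros H1 H2 H3 Hp. unfold f. rewrite !argfun_G by (auto; lra).
  assert (Gf eta u y <= Gf eta u x).
  { apply (mono_ge (Gf eta u) (Gd eta u)); auto.
    - intros z Hz. apply G_derive; auto; lra.
    - intros z Hz. apply Gd_sign_le; [lra|]. apply Hp; lra. }
  pose proof (atan_le _ _ H). lra.
Qed.

Lemma right_ge x y : - (PI/2) < x -> x <= y -> y < 0 ->
  (forall z, x < z < y -> 0 <= pp eta u (r_eta eta z ^ 2)) -> f y <= f x.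
Proof.
  intros H1 H2 H3 Hp. unfold f. rewrite !argfun_G by (auto; lra).
  assert (Gf eta u x <= Gf eta u y).
  { apply (mono_le (Gf eta u) (Gd eta u)); auto.
    - intros z Hz. apply G_derive; auto; lra.
    - intros z Hz. apply Gd_sign_ge; [lra|]. apply Hp; lra. }
  pose proof (atan_le _ _ H). lra.
Qed.

Lemma right_lt x y : - (PI/2) < x -> x < y -> y < 0 ->
  (forall z, x < z < y -> pp eta u (r_eta eta z ^ 2) < 0) -> f x < f y.
Proof.
  intros H1 H2 H3 Hp. unfold f. rewrite !argfun_G by (auto; lra).
  assert (Gf eta u y < Gf eta u x).
  { apply (mono_gt (Gf eta u) (Gd eta u)); auto.
    - intros z Hz. apply G_derive; auto; lra.
    - intros z Hz. apply Gd_sign_lt; [lra|]. apply Hp; lra. }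
  pose proof (atan_increasing _ _ H). lra.
Qed.

Lemma right_gt x y : - (PI/2) < x -> x < y -> y < 0 ->
  (forall z, x < z < y -> 0 < pp eta u (r_eta eta z ^ 2)) -> f y < f x.
Proof.
  intros H1 H2 H3 Hp. unfold f. rewrite !argfun_G by (auto; lra).
  assert (Gf eta u x < Gf eta u y).
  { apply (mono_lt (Gf eta u) (Gd eta u)); auto.
    - intros z Hz. apply G_derive; auto; lra.
    - intros z Hz. apply Gd_sign_gt; [lra|]. apply Hp; lra. }
  pose proof (atan_increasing _ _ H). lra.
Qed.

End S.


Lemma cont_contra g a b : continuity g -> a < b -> (forall x, a < x < b -> 0 <= g x) -> 0 <= g b.
Proof.
  intros Hc Hab Hp. destruct (Rle_or_lt 0 (g b)) as [h|h]; [exact h|]. exfalso.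
  specialize (Hc b). unfold continuity_pt, continue_in, limit1_in, limit_in in Hc.
  destruct (Hc (- g b / 2) ltac:(lra)) as [alp [Halp Hx]].
  set (x := b - Rmin (alp/2) ((b - a)/2)).
  assert (Hm1: 0 < Rmin (alp/2) ((b-a)/2)) by (apply Rmin_pos; lra).
  assert (Hm2: Rmin (alp/2) ((b-a)/2) <= alp/2) by apply Rmin_l.
  assert (Hm3: Rmin (alp/2) ((b-a)/2) <= (b-a)/2) by apply Rmin_r.
  specialize (Hx x). simpl in Hx. unfold R_dist, D_x, no_cond in Hx.
  assert (Hxx: Rabs (g x - g b) < - g b / 2).
  { apply Hx. split; [split; [exact I| unfold x; lra]|].
    unfold x. rewrite Rabs_left; lra. }
  specialize (Hp x ltac:(unfold x; lra)).
  apply Rabs_def2 in Hxx. lra.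
Qed.

Lemma sub_nondecr (D1 D2 : R -> Prop) f : (forall x, D2 x -> D1 x) -> nondecr_on D1 f -> nondecr_on D2 f.
Proof. unfold nondecr_on. intros. apply H0; auto. Qed.
Lemma sub_nonincr (D1 D2 : R -> Prop) f : (forall x, D2 x -> D1 x) -> nonincr_on D1 f -> nonincr_on D2 f.
Proof. unfold nonincr_on. intros. apply H0; auto. Qed.

Section S2.
Variables (eta u : R) (He : 0 < eta) (Hu : 0 < u).

Lemma mir_nondecr (D : R -> Prop) : (forall x, D x -> - PI < x < 0) ->
  nondecr_on D (argfun eta u) -> nondecr_on (fun x => D (- PI - x)) (argfun eta u).
Proof.
  unfold nondecr_on. intros HD H x y Dx Dy Hxy.
  pose proof (HD _ Dx). pose proof (HD _ Dy).
  specialize (H (- PI - y) (- PI - x) Dy Dx ltac:(lra)).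
  rewrite !f_mir in H by (auto; lra). lra.
Qed.

Lemma mir_nonincr (D : R -> Prop) : (forall x, D x -> - PI < x < 0) ->
  nonincr_on D (argfun eta u) -> nonincr_on (fun x => D (- PI - x)) (argfun eta u).
Proof.
  unfold nonincr_on. intros HD H x y Dx Dy Hxy.
  pose proof (HD _ Dx). pose proof (HD _ Dy).
  specialize (H (- PI - y) (- PI - x) Dy Dx ltac:(lra)).
  rewrite !f_mir in H by (auto; lra). lra.
Qed.

Lemma RP a b : 0 <= a -> a < b -> b <= Xm eta ->
  (SgP eta u a b \/ SgN eta u a b) ->
  nondecr_on (fun x => thm eta b <= x <= thm eta a /\ - PI < x < 0) (argfun eta u) \/
  nonincr_on (fun x => thm eta b <= x <= thm eta a /\ - PI < x < 0) (argfun eta u).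
Proof.
  intros Ha Hab Hb HS. pose proof (Xm_props eta He) as HX.
  pose proof (thm_range eta a He ltac:(lra)) as Ra.
  pose proof (thm_range eta b He ltac:(lra)) as Rb.
  pose proof (thm_lt eta a b He Ha Hab Hb) as Hlt.
  destruct HS as [HP|HN].
  - right.
    assert (Hb': b < Xm eta).
    { destruct (Req_dec b (Xm eta)) as [e|ne]; [|lra]. exfalso.
      pose proof (cont_contra (pp eta u) a b (pp_cont eta u) Hab HP).
      rewrite e in H. pose proof (pp_Xm eta u He Hu). lra. }
    pose proof (thm_lt eta b (Xm eta) He ltac:(lra) Hb' ltac:(lra)) as Hlt2.
    rewrite thm_Xm in Hlt2 by auto.
    intros x y [Dx1 Dx2] [Dy1 Dy2] Hxy.
    apply (right_ge eta u He Hu); try lra.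
    intros z Hz. apply HP. split.
    + apply (xs_gt eta a z He); lra.
    + apply (xs_lt eta b z He); lra.
  - left. intros x y [Dx1 Dx2] [Dy1 Dy2] Hxy.
    destruct (Req_dec x y) as [e|ne]; [subst; lra|].
    destruct (Req_dec x (- (PI/2))) as [e|ne2].
    + subst x. rewrite (f_mid eta u He Hu). left. apply (f_pos eta u He Hu). lra.
    + apply (right_le eta u He Hu); try lra.
      intros z Hz. apply HN. split.
      * apply (xs_gt eta a z He); lra.
      * apply (xs_lt eta b z He); lra.
Qed.

End S2.


Definition tfun eta (q : nat -> R) m i :=
  if (i <=? m)%nat then - PI - thm eta (q i) else thm eta (q (2*m - i)%nat).

Lemma tfun_l eta q m i : (i <= m)%nat -> tfun eta q m i = - PI - thm eta (q i).
Proof. intros H. unfold tfun. rewrite (proj2 (Nat.leb_le i m) H). reflexivity. Qed.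

Lemma tfun_r eta q m i : 0 < eta -> (m <= i)%nat -> q m = Xm eta ->
  tfun eta q m i = thm eta (q (2*m - i)%nat).
Proof.
  intros He H Hq. unfold tfun.
  destruct (Nat.eq_dec i m) as [e|ne].
  - subst i. rewrite (proj2 (Nat.leb_le m m) (Nat.le_refl m)).
    replace (2*m - m)%nat with m by lia. rewrite Hq, thm_Xm by exact He. lra.
  - rewrite (proj2 (Nat.leb_gt i m) ltac:(lia)). reflexivity.
Qed.

Section S3.
Variables (eta u : R) (He : 0 < eta) (Hu : 0 < u).

Lemma part1 :
  (exists (n : nat) (t : nat -> R),
      (1 <= n)%nat /\ (n <= 9)%nat /\ t 0%nat = - PI /\ t n = 0 /\
      (forall i, (i < n)%nat -> t i < t (S i)) /\
      (forall i, (i < n)%nat ->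
         let D := fun x => t i <= x <= t (S i) /\ - PI < x < 0 in
         nondecr_on D (argfun eta u) \/ nonincr_on D (argfun eta u))).
Proof.
  pose proof (Xm_props eta He) as HX.
  destruct (xpieces eta u He Hu) as [y1 [y2 [y3 [Hy [Hy' [P1 [P2 [P3 P4]]]]]]]].
  set (pts := fun i : nat => match i with O => 0 | S O => y1 | S (S O) => y2 | S (S (S O)) => y3 | _ => Xm eta end).
  assert (C1: pts 0%nat < pts 4%nat) by (simpl; lra).
  assert (C2: forall i, (i < 4)%nat -> pts i <= pts (S i)).
  { intros i Hi. destruct i as [|[|[|[|i]]]]; simpl; try lra; lia. }
  assert (C3: forall i, (i < 4)%nat -> SgP eta u (pts i) (pts (S i)) \/ SgN eta u (pts i) (pts (S i))).
  { intros i Hi. destruct i as [|[|[|[|i]]]]; simpl; auto; lia. }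
  destruct (compact_pts (fun a b => SgP eta u a b \/ SgN eta u a b) 4 pts C1 C2 C3) as
    [m [q [Hm1 [Hm2 [Hq0 [Hqm [Hinc HPq]]]]]]].
  simpl in Hq0, Hqm.
    assert (Hqr: forall i, (i <= m)%nat -> 0 <= q i <= Xm eta).
    { intros i Hi. split.
      - rewrite <- Hq0. apply (chain_le q m); try lia. intros k Hk. left. auto.
      - rewrite <- Hqm. apply (chain_le q m); try lia. intros k Hk. left. auto. }
    exists (2*m)%nat, (tfun eta q m).
    split; [lia|]. split; [lia|]. split; [|split; [|split]].
    + rewrite tfun_l by lia. rewrite Hq0, thm_0. ring.
    + rewrite tfun_r by (auto; lia). replace (2*m - 2*m)%nat with 0%nat by lia.
      rewrite Hq0. apply thm_0.
    + intros i Hi. destruct (Compare_dec.le_lt_dec (S i) m) as [h|h].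
      * rewrite !tfun_l by lia. pose proof (Hqr i ltac:(lia)). pose proof (Hqr (S i) h).
        pose proof (thm_lt eta (q i) (q (S i)) He ltac:(lra) (Hinc i ltac:(lia)) ltac:(lra)). lra.
      * rewrite !tfun_r by (auto; lia).
        replace (2*m - i)%nat with (S (2*m - S i)) by lia.
        set (j := (2*m - S i)%nat).
        pose proof (Hqr j ltac:(unfold j; lia)). pose proof (Hqr (S j) ltac:(unfold j; lia)).
        apply (thm_lt eta (q j) (q (S j)) He); try lra. apply Hinc. unfold j; lia.
    + intros i Hi. cbv zeta. destruct (Compare_dec.le_lt_dec (S i) m) as [h|h].
      * rewrite !tfun_l by lia. pose proof (Hqr i ltac:(lia)). pose proof (Hqr (S i) h).
        destruct (RP eta u He Hu (q i) (q (S i)) ltac:(lra) (Hinc i ltac:(lia)) ltac:(lra)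
                    (HPq i ltac:(lia))) as [HH|HH].
        -- left. eapply sub_nondecr; [|apply (mir_nondecr eta u He Hu); [|exact HH]].
           ++ intros x Hx. simpl. lra.
           ++ intros x Hx. lra.
        -- right. eapply sub_nonincr; [|apply (mir_nonincr eta u He Hu); [|exact HH]].
           ++ intros x Hx. simpl. lra.
           ++ intros x Hx. lra.
      * rewrite !tfun_r by (auto; lia).
        replace (2*m - i)%nat with (S (2*m - S i)) by lia.
        set (j := (2*m - S i)%nat).
        pose proof (Hqr j ltac:(unfold j; lia)). pose proof (Hqr (S j) ltac:(unfold j; lia)).
        apply (RP eta u He Hu (q j) (q (S j))); try lra.
        -- apply Hinc. unfold j; lia.
        -- apply HPq. unfold j; lia.
Qed.

Lemma part2 : u <= 1 ->
   exists tt : R,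
     - (PI / 2) < tt < 0 /\
     Pthe eta u tt = 0 /\
     (forall th, - (PI / 2) < th < 0 -> Pthe eta u th = 0 -> th = tt) /\
     decr_on (fun x => - PI < x < - tt - PI) (argfun eta u) /\
     incr_on (fun x => - tt - PI < x < tt) (argfun eta u) /\
     decr_on (fun x => tt < x < 0) (argfun eta u).
Proof.
  intros Hu1. pose proof (Xm_props eta He) as HX.
  pose proof (pp_Xm eta u He Hu) as HpX.
  assert (Hp0: pp eta u 0 = 3) by (unfold pp; ring).
  destruct (IVT (fun x => - pp eta u x) 0 (Xm eta)) as [x0 [Hx0 Hpx0]].
  { apply continuity_opp. apply pp_cont. }
  { lra. } { lra. } { lra. }
  assert (Hpx: pp eta u x0 = 0) by lra.
  assert (Hx0': 0 < x0 < Xm eta).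
  { split.
    - destruct (Req_dec x0 0) as [e|ne]; [rewrite e in Hpx; lra|lra].
    - destruct (Req_dec x0 (Xm eta)) as [e|ne]; [rewrite e in Hpx; lra|lra]. }
  pose proof (thm_lt eta 0 x0 He ltac:(lra) ltac:(lra) ltac:(lra)) as T1.
  pose proof (thm_lt eta x0 (Xm eta) He ltac:(lra) ltac:(lra) ltac:(lra)) as T2.
  rewrite thm_0 in T1. rewrite thm_Xm in T2 by exact He.
  set (tt := thm eta x0) in *.
  assert (Sgt: forall z, tt < z < 0 -> 0 < pp eta u (r_eta eta z ^ 2)).
  { intros z Hz. pose proof (xs_lt eta x0 z He ltac:(lra) ltac:(unfold tt in Hz; lra) ltac:(lra)).
    assert (0 <= r_eta eta z ^ 2) by nra.
    pose proof (pp_strict_decr eta u _ _ He Hu Hu1 H0 H ltac:(lra)). lra. }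
  assert (Slt: forall z, - (PI/2) < z < tt -> pp eta u (r_eta eta z ^ 2) < 0).
  { intros z Hz. pose proof (xs_gt eta x0 z He ltac:(lra) ltac:(lra) ltac:(unfold tt in Hz; lra)).
    assert (Hs: sin z < 0) by (apply sin_neg_of; lra).
    destruct (r_props eta z He Hs) as [r0 [r1 _]].
    pose proof (pp_strict_decr eta u x0 (r_eta eta z ^ 2) He Hu Hu1 ltac:(lra) H ltac:(nra)). lra. }
  assert (Rdec: forall x y, tt < x -> x < y -> y < 0 -> argfun eta u y < argfun eta u x).
  { intros x y H1 H2 H3. apply (right_gt eta u He Hu); try lra.
    intros z Hz. apply Sgt. lra. }
  assert (Rinc: forall x y, - (PI/2) < x -> x < y -> y < tt -> argfun eta u x < argfun eta u y).
  { intros x y H1 H2 H3. apply (right_lt eta u He Hu); try lra.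
    intros z Hz. apply Slt. lra. }
  exists tt. split; [lra|]. split; [|split; [|split; [|split]]].
  - rewrite Pthe_pp. unfold tt. rewrite xs_eq by auto. exact Hpx.
  - intros th Hth Hp. rewrite Pthe_pp in Hp.
    destruct (Rtotal_order th tt) as [h|[h|h]]; [|exact h|].
    + specialize (Slt th ltac:(lra)). lra.
    + specialize (Sgt th ltac:(lra)). lra.
  - intros x y Hx Hy Hxy.
    specialize (Rdec (- PI - y) (- PI - x) ltac:(lra) ltac:(lra) ltac:(lra)).
    rewrite !(f_mir eta u He Hu) in Rdec by lra. lra.
  - intros x y Hx Hy Hxy.
    destruct (Rlt_or_le x (- (PI/2))) as [h1|h1].
    + destruct (Rlt_or_le y (- (PI/2))) as [h2|h2].
      * specialize (Rinc (- PI - y) (- PI - x) ltac:(lra) ltac:(lra) ltac:(lra)).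
        rewrite !(f_mir eta u He Hu) in Rinc by lra. lra.
      * pose proof (f_neg eta u He Hu x ltac:(lra)).
        destruct (Req_dec y (- (PI/2))) as [e|ne].
        -- rewrite e, (f_mid eta u He Hu). exact H.
        -- pose proof (f_pos eta u He Hu y ltac:(lra)). lra.
    + destruct (Req_dec x (- (PI/2))) as [e|ne].
      * rewrite e, (f_mid eta u He Hu). apply (f_pos eta u He Hu). lra.
      * apply Rinc; lra.
  - intros x y Hx Hy Hxy. apply Rdec; lra.
Qed.

End S3.

Theorem lemma5p2 (eta u : R) (Heta : 0 < eta) (Hu : 0 < u) :
  (exists (n : nat) (t : nat -> R),
      (1 <= n)%nat /\ (n <= 9)%nat /\ t 0%nat = - PI /\ t n = 0 /\
      (forall i, (i < n)%nat -> t i < t (S i)) /\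
      (forall i, (i < n)%nat ->
         let D := fun x => t i <= x <= t (S i) /\ - PI < x < 0 in
         nondecr_on D (argfun eta u) \/ nonincr_on D (argfun eta u)))
  /\
  (u <= 1 ->
   exists tt : R,
     - (PI / 2) < tt < 0 /\
     Pthe eta u tt = 0 /\
     (forall th, - (PI / 2) < th < 0 -> Pthe eta u th = 0 -> th = tt) /\
     decr_on (fun x => - PI < x < - tt - PI) (argfun eta u) /\
     incr_on (fun x => - tt - PI < x < tt) (argfun eta u) /\
     decr_on (fun x => tt < x < 0) (argfun eta u)).
Proof.
  split; [apply part1 | apply part2]; assumption.
Qed.
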